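(* Let $p$ be an odd prime, $s\ge1$, and $r\ge3$ an integer dividing $\frac{p^s\pm1}2$ (fixed sign). Let $\omega=\eta\sum_{i=0}^{r-2}\Delta_iS_i$, viewed as an $R_r$-linear combination of colored cores in the solid torus $S^1\times D^2$, and let $\tilde\omega=\sum_{i=0}^{r-2}(\eta\Delta_i)^{p^s}\tilde S_i$ be its lift to the $p^s$-fold cyclic cover $\tilde{S^1}\times D^2$. Then, in $V(\tilde{S^1}\times S^1)$, $$\tilde\omega\equiv\mp\left(\frac{-2r}{p}\right)^{s}\eta\sum_{i=0}^{r-2}\Delta_i\tilde S_i\pmod p,$$ where $\mp$ is opposite to the sign in the hypothesis.
   Context: $\lambda=e^{2\pi i/(2r)}$; $\Delta_0=1$, $\Delta_1=-\lambda-\lambda^{-1}$, $\Delta_{i+1}=\Delta_1\Delta_i-\Delta_{i-1}$; $\eta=-i(\lambda-\lambda^{-1})/\sqrt{2r}$. $S_i$ denotes the core of $S^1\times D^2$ with standard thickening colored $i$, and $\tilde S_i$ the core of $\tilde{S^1}\times D^2$ (where $\tilde{S^1}\to S^1$ is the $p^s$-fold cover) colored $i$; these are regarded as elements $[S_i]$, $[\tilde S_i]$ of the modules $V(S^1\times S^1)$, $V(\tilde{S^1}\times S^1)$ of the Blanchet–Habegger–Masbaum–Vogel $SU(2)$ TQFT (with $p=2r$ in their notation) with coefficients in $R_r=\mathbb Z[\tfrac1{2r},\xi_t]$ ($t=4r$ if $r$ even, $8r$ if odd) via $A\mapsto-e^{2\pi i/4r}$. $\left(\frac{-2r}{p}\right)$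 is the Legendre symbol; congruence is modulo $p$ times the module. *)

(* Defs.v *)
From HB Require Import structures.
From mathcomp Require Import all_boot all_order all_algebra.
From mathcomp Require Import algC.
Set Implicit Arguments. Unset Strict Implicit. Unset Printing Implicit Defensive.
Import Order.TTheory GRing.Theory Num.Theory.
Local Open Scope ring_scope.

(* e^{2 pi i / m} for m even: (m/2).-root (-1) is the root of -1 of minimal
   nonnegative argument, i.e. e^{i pi / (m/2)}. *)
Definition lambda (r : nat) : algC := r.-root (-1).   (* e^{2 pi i/(2r)} *)

(* t = 4r if r even, 8r if r odd; xi_t = e^{2 pi i/t} *)
Definition tt (r : nat) : nat := if odd r then 8 * r else 4 * r.
Definition xi (r : nat) : algC := ((tt r)./2).-root (-1).

Fixpoint Delta_pair (r : nat) (i : nat) : algC * algC :=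
  match i with
  | 0 => (1, - lambda r - (lambda r)^-1)
  | i'.+1 => let (a, b) := Delta_pair r i' in
             (b, (- lambda r - (lambda r)^-1) * b - a)
  end.
Definition Delta (r i : nat) : algC := (Delta_pair r i).1.

Definition eta (r : nat) : algC :=
  - 'i * (lambda r - (lambda r)^-1) / sqrtC ((2 * r)%:R).

(* membership in R_r = Z[1/(2r), xi_t] *)
Definition in_Rr (r : nat) (x : algC) : Prop :=
  exists (k : nat) (q : {poly int}),
    x * ((2 * r)%:R) ^+ k = (map_poly intr q).[xi r].

Definition congr_Rr (r p : nat) (x y : algC) : Prop :=
  exists z, in_Rr r z /\ x - y = p%:R * z.

(* V(S^1 x S^1) (and V(tilde S^1 x S^1)) for p = 2r is the free R_r-module
   with basis the cores colored 0 .. r-2 (BHMV).  An element is represented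
   by its coefficient vector in this basis. *)
Definition Vvec (r : nat) := {ffun 'I_(r.-1) -> algC}.

Definition in_V (r : nat) (v : Vvec r) : Prop := forall i, in_Rr r (v i).

Definition congr_V (r p : nat) (u v : Vvec r) : Prop :=
  exists w : Vvec r, @in_V r w /\ forall i, u i - v i = p%:R * w i.

Definition omega_tilde (r p s : nat) : Vvec r :=
  [ffun i : 'I_(r.-1) => (eta r * Delta r i) ^+ (p ^ s)].

Definition eta_Delta_vec (r : nat) (c : algC) : Vvec r :=
  [ffun i : 'I_(r.-1) => c * eta r * Delta r i].

Definition legendre (a : int) (p : nat) : int :=
  if (p%:Z %| a)%Z then 0
  else if [exists x : 'I_p, (p%:Z %| (x%:Z) ^+ 2 - a)%Z] then 1 else -1.

(* Main.v *)
Require Import Defs.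
From HB Require Import structures.
From mathcomp Require Import all_boot all_order all_algebra all_solvable all_field.
From mathcomp Require Import algC cyclotomic.
From mathcomp Require Import ring lra zify.
Require Import Defs.
Set Implicit Arguments. Unset Strict Implicit. Unset Printing Implicit Defensive.
Import Order.TTheory GRing.Theory Num.Theory.
Local Open Scope ring_scope.

Lemma keyR (R : realFieldType) (x v c s : R) : c^+2+s^+2 = 1 -> x^+2+v^+2 = 1 ->
  0 <= v -> 0 <= s -> x < c -> c != 1 -> x < x * (c^+2 - s^+2) + 2 * c * s * v.
Proof.
move=> h1 h2 hv hs hxc hc1.
have sp : 0 < s.
  rewrite lt_neqAle hs andbT; apply/eqP=> s0; subst s.
  have : c = 1 \/ c = -1 by move: h1; rewrite expr0n /= addr0 => /eqP; rewrite sqrf_eq1 => /orP[/eqP|/eqP]; [left|right].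
  case=> hc; first by rewrite hc eqxx in hc1.
  subst c; nra.
suff : x * s < c * v by nra.
have [hc|hc] := lerP 0 c.
- have [hx|hx] := lerP 0 x.
  + have vs : s < v by nra.
    nra.
  + nra.
- have vs : v < s by nra.
  nra.
Qed.

Lemma keyC (x v c s : algC) : x \is Num.real -> v \is Num.real -> c \is Num.real -> s \is Num.real ->
  c^+2+s^+2 = 1 -> x^+2+v^+2 = 1 ->
  0 <= v -> 0 <= s -> x < c -> c != 1 -> x < x * (c^+2 - s^+2) + 2 * c * s * v.
Proof.
move=> hx hv hc hs h1 h2 h3 h4 h5 h6.
pose X := in_algR hx; pose V := in_algR hv; pose C := in_algR hc; pose S := in_algR hs.
have := @keyR _ X V C S.
have E : forall a b : algR, (a = b) <-> (algRval a = algRval b).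
  by move=> a b; split=> [->//|]; apply: val_inj.
rewrite !E /= -!expr2 => H.
exact: (H h1 h2 h3 h4 h5 h6).
Qed.

Lemma unit_norm (z : algC) k : (0 < k)%N -> z ^+ k = 1 -> `|z| = 1.
Proof.
move=> k0 hz; have : `|z| ^+ k = 1 by rewrite -normrX hz normr1.
by move/eqP; rewrite pexpr_eq1 // => /eqP.
Qed.

Lemma unit_conj (z : algC) : `|z| = 1 -> z^* = z^-1.
Proof. by move=> hz; rewrite invC_norm hz expr1n invr1 mul1r. Qed.

Lemma unit_inj (z w : algC) : `|z| = 1 -> `|w| = 1 -> 'Re z = 'Re w ->
  0 <= 'Im z -> 0 <= 'Im w -> z = w.
Proof.
move=> hz hw hre hiz hiw.
have : 'Im z ^+ 2 = 'Im w ^+ 2.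
  have := normC2_Re_Im z; have := normC2_Re_Im w; rewrite hz hw hre => ->.
  by move/addrI.
move/eqP; rewrite eqrXn2 // => /eqP him.
by rewrite [z]Crect [w]Crect hre him.
Qed.

Lemma maxRe (s : seq algC) (P : pred algC) : has P s ->
  exists2 u, P u && (u \in s) & forall v, v \in s -> P v -> 'Re v <= 'Re u.
Proof.
elim: s => [//|x s IH] /=.
case hs: (has P s).
  case: (IH hs) => u /andP[Pu us] umax _.
  case Px: (P x).
    have /orP[le|le] := real_leVge (Creal_Re x) (Creal_Re u).
      exists u; first by rewrite Pu inE us orbT.
      by move=> v; rewrite inE => /orP[/eqP->|/umax] //.
    exists x; first by rewrite Px inE eqxx.
    move=> v; rewrite inE => /orP[/eqP->|/umax H /H] //.
    by move=> h; apply: le_trans h le.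
  exists u; first by rewrite Pu inE us orbT.
  by move=> v; rewrite inE => /orP[/eqP->|/umax]; rewrite ?Px.
rewrite orbF => Px; exists x; first by rewrite Px inE eqxx.
move=> v; rewrite inE => /orP[/eqP->//|vs Pv].
by move/hasPn: hs => /(_ v vs); rewrite Pv.
Qed.

Lemma root_neg1_prim n : (0 < n)%N -> (n * 2).-primitive_root (n.-root (-1) : algC).
Proof.
move=> n0; set y := n.-root (-1).
have yn : y ^+ n = -1 := rootCK n0 (-1).
have yN : y ^+ (n * 2) = 1 by rewrite exprM yn sqrrN expr1n.
have N0 : (0 < n * 2)%N by rewrite muln_gt0 n0.
have ny : `|y| = 1 := unit_norm N0 yN.
have yU : y != 0 by rewrite -normr_eq0 ny oner_eq0.
case: (C_prim_root_exists N0) => w wp.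
pose inG (z : algC) := [exists j : 'I_(n * 2), z == y ^+ j].
have inGP z : reflect (exists j, z = y ^+ j) (inG z).
  apply: (iffP existsP) => [[j /eqP->]|[j ->]]; first by exists j.
  by exists (Ordinal (ltn_pmod j N0)); rewrite /= (expr_mod _ yN) eqxx.
suff allG : forall z, z ^+ (n * 2) = 1 -> inG z.
  case: (prim_order_exists N0 yN) => m ym mN.
  have [j wj] := inGP _ (allG w (prim_expr_order wp)).
  have Nm : (n * 2 %| m)%N.
    by rewrite (prim_order_dvd wp) wj exprAC (prim_expr_order ym) expr1n.
  have -> : (n * 2)%N = m by apply/eqP; rewrite eqn_dvd Nm mN.
  exact: ym.
have yinv : y^-1 = y ^+ (n * 2).-1.
  by apply: (mulfI yU); rewrite mulfV // -exprS prednK // yN.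
have Gpow k : inG (y ^+ k) by apply/inGP; exists k.
have GM a b : inG a -> inG b -> inG (a * b).
  by move=> /inGP[i ->] /inGP[j ->]; rewrite -exprD Gpow.
have GV : inG y^-1 by rewrite yinv Gpow.
have GX a k : inG a -> inG (a ^+ k).
  by move=> /inGP[i ->]; rewrite -exprM Gpow.
have Gconj a : inG a -> inG a^*.
  by move=> /inGP[i ->]; rewrite rmorphXn /= unit_conj // GX.
have nGconj a : ~~ inG a -> ~~ inG a^*.
  by apply: contra => /Gconj; rewrite conjCK.
move=> z zN; case: (boolP (inG z)) => // zG; exfalso.
pose P (v : algC) := (v ^+ n == -1) && ~~ inG v.
pose s := [seq w ^+ k | k <- iota 0 (n * 2)].
have mem_s v : v ^+ (n * 2) = 1 -> v \in s.
  move=> vN; case: (prim_rootP wp vN) => i ->; apply: map_f.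
  by rewrite mem_iota /= add0n ltn_ord.
have s_N v : v \in s -> v ^+ (n * 2) = 1.
  by case/mapP => k _ ->; rewrite exprAC (prim_expr_order wp) expr1n.
have hasPs : has P s.
  have := sqrf_eq1 (z ^+ n); rewrite -exprM zN eqxx => /esym/orP[/eqP zn1|/eqP zn1].
    apply/hasP; exists (z * y).
      by apply: mem_s; rewrite exprMn zN yN mulr1.
    rewrite /P exprMn zn1 yn mul1r eqxx /=.
    apply/negP => zyG; move/negP: zG; apply; have := GM _ _ zyG GV.
    by rewrite mulrK // unitfE.
  by apply/hasP; exists z; [apply: mem_s|rewrite /P zn1 eqxx zG].
case: (maxRe hasPs) => u1 /andP[Pu1 u1s] max1.
have [u [Pu Imu umax]] : exists u, [/\ P u, 0 <= 'Im u &
    forall v, v ^+ (n * 2) = 1 -> P v -> 'Re v <= 'Re u].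
  have /orP[hi|hi] := real_leVge (real0 _) (Creal_Im u1).
    by exists u1; split=> // v /mem_s; apply: max1.
  exists u1^*; split.
  - move: Pu1; rewrite /P => /andP[/eqP e nG]; rewrite -rmorphXn /= e.
    by rewrite conjCN1 eqxx nGconj.
  - by rewrite Im_conj oppr_ge0.
  - by move=> v /mem_s vs Pv; rewrite Re_conj; apply: max1.
move: Pu; rewrite /P => /andP[/eqP un uG].
have uN : u ^+ (n * 2) = 1 by rewrite exprM un sqrrN expr1n.
have nu : `|u| = 1 := unit_norm N0 uN.
have Imy : 0 <= 'Im y.
  case: (ltngtP n 1) => [|n1|n1]; first by rewrite ltnS leqn0 => /eqP n00; rewrite n00 in n0.
    exact: Im_rootC_ge0.
  rewrite /y n1 root1C; have /Creal_ImP -> : (-1 : algC) \is Num.real by rewrite rpredN rpred1.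
  by [].
have leRe : 'Re u <= 'Re y := rootC_Re_max n0 un Imu.
have ltRe : 'Re u < 'Re y.
  rewrite lt_neqAle leRe andbT; apply/eqP => e.
  have uy : u = y by apply: unit_inj.
  by move: uG; rewrite uy (Gpow 1%N) . 
have cn1 : 'Re y != 1.
  apply/eqP => e; have y1 : y = 1.
    have R1 : (1 : algC) \is Num.real := rpred1 _.
    by apply: unit_inj; rewrite ?normr1 ?e ?(Creal_ReP _ R1) ?(Creal_ImP _ R1).
  by move: yn; rewrite y1 expr1n => /eqP; rewrite -addr_eq0 (eqr_nat _ 2 0).
pose v := u * (y^-1) ^+ 2.
have vN : v ^+ (n * 2) = 1 by rewrite exprMn uN exprAC exprVn yN invr1 expr1n mulr1.
have Pv : P v.
  rewrite /P exprMn un exprAC exprVn yn invrN invr1 sqrrN expr1n mulr1 eqxx /=.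
  apply/negP => vG; move/negP: uG; apply; have -> : u = v * y ^+ 2 by rewrite /v exprVn mulrVK // unitfE expf_neq0.
  by rewrite GM // Gpow.
have := umax v vN Pv.
have -> : 'Re v = 'Re u * ('Re y ^+ 2 - 'Im y ^+ 2) + 2 * 'Re y * 'Im y * 'Im u.
  rewrite /v -unit_conj // [u]Crect [y]Crect conjC_rect ?Creal_Re ?Creal_Im //.
  rewrite -mulrN expr2 !mulC_rect Re_rect; last 2 first.
  - by rewrite !(rpredD, rpredM, rpredN, rpredB, Creal_Re, Creal_Im).
  - by rewrite !(rpredD, rpredM, rpredN, rpredB, Creal_Re, Creal_Im).
  rewrite !Re_rect ?Im_rect ?Creal_Re ?Creal_Im //; ring.
have h1 : 'Re y ^+ 2 + 'Im y ^+ 2 = 1 by rewrite -normC2_Re_Im ny expr1n.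
have h2 : 'Re u ^+ 2 + 'Im u ^+ 2 = 1 by rewrite -normC2_Re_Im nu expr1n.
have := keyC (Creal_Re u) (Creal_Im u) (Creal_Re y) (Creal_Im y) h1 h2 Imu Imy ltRe cn1.
by move=> /lt_le_trans H /H; rewrite ltxx.
Qed.

Section Ring.
Variable r : nat.
Hypothesis r0 : (0 < r)%N.
Local Notation R := (in_Rr r).
Local Notation tr := ((2 * r)%:R : algC).

Lemma tr_neq0 : tr != 0.
Proof. by rewrite pnatr_eq0 muln_eq0 /= -lt0n r0. Qed.

Lemma evD (A B : {poly int}) (z : algC) :
  (map_poly intr (A + B)).[z] = (map_poly intr A).[z] + (map_poly intr B).[z].
Proof. by rewrite rmorphD hornerD. Qed.
Lemma evM (A B : {poly int}) (z : algC) :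
  (map_poly intr (A * B)).[z] = (map_poly intr A).[z] * (map_poly intr B).[z].
Proof. by rewrite rmorphM hornerM. Qed.
Lemma evC (a : int) (z : algC) : (map_poly intr a%:P).[z] = a%:~R.
Proof. by rewrite map_polyC hornerC. Qed.

Lemma Rr_int (k : int) : R k%:~R.
Proof. by exists 0%N, k%:P; rewrite expr0 mulr1 map_polyC hornerC. Qed.

Lemma Rr_nat (k : nat) : R k%:R.
Proof. by have := Rr_int k; rewrite -pmulrn. Qed.

Lemma Rr0 : R 0. Proof. exact: (Rr_nat 0). Qed.
Lemma Rr1 : R 1. Proof. exact: (Rr_nat 1). Qed.

Lemma Rr_xi : R (xi r).
Proof. by exists 0%N, 'X; rewrite expr0 mulr1 map_polyX hornerX. Qed.

Lemma trz k : ((2 * r)%:Z ^+ k)%:~R = tr ^+ k :> algC.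
Proof. by rewrite rmorphXn /= -pmulrn. Qed.

Lemma Rr_add x y : R x -> R y -> R (x + y).
Proof.
move=> [k [A hA]] [l [B hB]]; exists (k + l)%N, (A * ((2 * r)%:Z ^+ l)%:P + B * ((2 * r)%:Z ^+ k)%:P).
rewrite evD !evM !evC !trz -hA -hB.
by rewrite exprD; ring.
Qed.

Lemma Rr_mul x y : R x -> R y -> R (x * y).
Proof.
move=> [k [A hA]] [l [B hB]]; exists (k + l)%N, (A * B).
by rewrite evM -hA -hB exprD; ring.
Qed.

Lemma Rr_opp x : R x -> R (- x).
Proof. by move=> hx; rewrite -mulN1r; apply: Rr_mul => //; exact: (Rr_int (-1)). Qed.

Lemma Rr_sub x y : R x -> R y -> R (x - y).
Proof. by move=> hx hy; apply: Rr_add => //; apply: Rr_opp. Qed.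

Lemma Rr_exp x k : R x -> R (x ^+ k).
Proof. by move=> hx; elim: k => [|k IH]; [rewrite expr0; exact: Rr1|rewrite exprS; exact: Rr_mul]. Qed.

Lemma Rr_inv_tr : R tr^-1.
Proof. by exists 1%N, 1; rewrite expr1 mulVf ?tr_neq0 // rmorph1 hornerC. Qed.

Lemma Rr_prod (I : Type) (s : seq I) (F : I -> algC) :
  (forall i, R (F i)) -> R (\prod_(i <- s) F i).
Proof. by move=> h; apply: (big_ind R Rr1 Rr_mul) => i _; apply: h. Qed.

Lemma Rr_sum (I : Type) (s : seq I) (F : I -> algC) :
  (forall i, R (F i)) -> R (\sum_(i <- s) F i).
Proof. by move=> h; apply: (big_ind R Rr0 Rr_add) => i _; apply: h. Qed.

Variable p : nat.
Local Notation cg := (congr_Rr r p).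

Lemma cg_refl x : cg x x.
Proof. by exists 0; split; [exact: Rr0|rewrite subrr mulr0]. Qed.

Lemma cg_sym x y : cg x y -> cg y x.
Proof. by case=> z [hz e]; exists (- z); split; [exact: Rr_opp|rewrite mulrN -e opprB]. Qed.

Lemma cg_trans x y w : cg x y -> cg y w -> cg x w.
Proof.
case=> z [hz e] [z' [hz' e']]; exists (z + z'); split; first exact: Rr_add.
by rewrite mulrDr -e -e'; ring.
Qed.

Lemma cg_add x y u v : cg x y -> cg u v -> cg (x + u) (y + v).
Proof.
case=> z [hz e] [z' [hz' e']]; exists (z + z'); split; first exact: Rr_add.
by rewrite mulrDr -e -e'; ring.
Qed.

Lemma cg_opp x y : cg x y -> cg (- x) (- y).
Proof. by case=> z [hz e]; exists (- z); split; [exact: Rr_opp|rewrite mulrN -e; ring]. Qed.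

Lemma cg_mulr x y u : cg x y -> R u -> cg (x * u) (y * u).
Proof.
case=> z [hz e] hu; exists (z * u); split; first exact: Rr_mul.
by rewrite mulrA -e; ring.
Qed.

Lemma cg_mul x y u v : cg x y -> cg u v -> R u -> R y -> cg (x * u) (y * v).
Proof.
move=> h1 h2 hu hy; apply: cg_trans (cg_mulr h1 hu) _.
by rewrite ![y * _]mulrC; apply: cg_mulr.
Qed.

Lemma cg_exp x y k : cg x y -> R x -> R y -> cg (x ^+ k) (y ^+ k).
Proof.
move=> h hx hy; elim: k => [|k IH]; first by rewrite !expr0; apply: cg_refl.
by rewrite !exprS; apply: cg_mul => //; apply: Rr_exp.
Qed.

Lemma cg_eq x y : x = y -> cg x y.
Proof. by move=> ->; apply: cg_refl. Qed.

Lemma cg_int (a b : int) : (p%:Z %| a - b)%Z -> cg a%:~R b%:~R.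
Proof.
case/dvdzP => k e; exists k%:~R; split; first exact: Rr_int.
by rewrite -rmorphB /= e rmorphM /= mulrC -pmulrn.
Qed.

Hypothesis pr : prime p.

Lemma frob x y : R x -> R y -> cg ((x + y) ^+ p) (x ^+ p + y ^+ p).
Proof.
move=> hx hy; have p0 := prime_gt0 pr.
case: p pr p0 => [//|p'] pr' _.
rewrite exprDn big_ord_recl big_ord_recr /= subn0 subnn expr0 mul1r mulr1 !bin0 binn !mulr1n.
pose G (i : 'I_p') := x ^+ (p'.+1 - bump 0 i) * y ^+ bump 0 i *+ ('C(p'.+1, bump 0 i) %/ p'.+1).
exists (\sum_(i < p') G i); split.
  apply: Rr_sum => i; rewrite /G -mulr_natr; apply: Rr_mul; last exact: Rr_nat.
  by apply: Rr_mul; apply: Rr_exp.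
rewrite mulr_sumr.
have -> : \sum_(i < p') x ^+ (p'.+1 - bump 0 i) * y ^+ bump 0 i *+ 'C(p'.+1, bump 0 i) = \sum_(i < p') p'.+1%:R * G i.
  apply: eq_bigr => i _; rewrite /G.
  rewrite mulr_natl -mulrnA; congr (_ *+ _).
  rewrite ?divnK // ?(mulnC _ (_ %/ _)) ?divnK //; apply: prime_dvd_bin => //.
  by rewrite /bump /= add1n ltnS ltn_ord.
by rewrite /bump /= add1n; ring.
Qed.


Lemma frobN s x y : R x -> R y -> cg ((x + y) ^+ (p ^ s)) (x ^+ (p ^ s) + y ^+ (p ^ s)).
Proof.
move=> hx hy; elim: s => [|s IH]; first by rewrite expn0 !expr1; apply: cg_refl.
rewrite expnSr !exprM.
apply: cg_trans (frob (Rr_exp _ hx) (Rr_exp _ hy)).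
apply: cg_exp => //; first by apply: Rr_exp; apply: Rr_add.
by apply: Rr_add; apply: Rr_exp.
Qed.

End Ring.

Lemma Delta_rec r i : Delta r i.+2 = (- lambda r - (lambda r)^-1) * Delta r i.+1 - Delta r i.
Proof.
rewrite /Delta /=; case: (Delta_pair r i) => a b /=; by [].
Qed.

Lemma Delta0 r : Delta r 0 = 1. Proof. by []. Qed.
Lemma Delta1 r : Delta r 1 = - lambda r - (lambda r)^-1. Proof. by []. Qed.


Lemma prod_one_sub n (mu : algC) : n.-primitive_root mu ->
  \prod_(1 <= k < n) (1 - mu ^+ k) = n%:R.
Proof.
move=> pm; have n0 := prim_order_gt0 pm.
have F := factor_Xn_sub_1 pm.
rewrite big_ltn // expr0 subrX1 in F.
have Q : \prod_(1 <= i < n) ('X - (mu ^+ i)%:P) = \sum_(i < n) 'X^i.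
  have nz : ('X - 1 : {poly algC}) != 0 by rewrite -polyC1 polyXsubC_eq0.
  by apply: (mulfI nz); rewrite -F polyC1.
have := congr1 (fun q => q.[1]) Q; rewrite horner_prod horner_sum /=.
under eq_bigr do rewrite hornerXsubC.
move=> ->; under eq_bigr do rewrite hornerXn expr1n.
by rewrite sumr_const card_ord.
Qed.

Lemma term_id (z mu : algC) r i : z != 0 -> mu = z ^+ 2 -> mu ^+ r = -1 ->
  1 - (mu ^+ i)^-1 = (z ^+ r * z^-1 ^+ i) ^+ 2 * (1 - mu ^+ i).
Proof.
move=> z0 emu mur.
have mu0 : mu != 0 by rewrite emu expf_neq0.
have zr2 : (z ^+ r) ^+ 2 = -1 by rewrite exprAC -emu mur.
have zi2 : (z^-1 ^+ i) ^+ 2 = (mu ^+ i)^-1 by rewrite exprAC exprVn -emu exprVn.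
rewrite exprMn zr2 zi2 mulrBr mulr1 mulN1r mulNr opprK mulVf ?expf_neq0 //; ring.
Qed.

Lemma sqrt_r (r : nat) (z : algC) : (0 < r)%N -> (2 * (2 * r))%N.-primitive_root z ->
  ((\prod_(1 <= k < r) (z ^+ r * (z^-1) ^+ k)) * \prod_(1 <= k < r) (1 - (z ^+ 2) ^+ k)) ^+ 2 = r%:R.
Proof.
move=> r0 pz; set mu := z ^+ 2.
have pmu : (2 * r)%N.-primitive_root mu.
  have := dvdn_prim_root pz (dvdn_mull 2 (dvdnn (2 * r))).
  by rewrite mulnK // muln_gt0.
have z0 : z != 0.
  apply/eqP => e; have := prim_expr_order pz; rewrite e expr0n.
  have -> : (2 * (2 * r) == 0)%N = false by lia.
  by move/eqP; rewrite eq_sym oner_eq0.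
have mu0 : mu != 0 by rewrite expf_neq0.
have mur : mu ^+ r = -1.
  have : (mu ^+ r) ^+ 2 = 1 by rewrite -exprM mulnC (prim_expr_order pmu).
  move/eqP; rewrite sqrf_eq1 => /orP[/eqP e|/eqP //].
  have : (2 * r %| r)%N by rewrite (prim_order_dvd pmu) e.
  by move/(dvdn_leq r0); lia.
have full := prod_one_sub pmu.
rewrite (@big_cat_nat _ _ _ r) /= in full; [|lia|lia].
rewrite (@big_ltn _ _ _ r) /= in full; last by lia.
rewrite mur -[r.+1]add1n big_addn in full.
have e2 : (2 * r - r = r)%N by lia.
rewrite e2 in full.
have E : \prod_(1 <= i < r) (1 - mu ^+ (i + r)) =
    (\prod_(1 <= k < r) (z ^+ r * (z^-1) ^+ k)) ^+ 2 * \prod_(1 <= k < r) (1 - mu ^+ k).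
  rewrite big_nat_rev -prodrXl -big_split; apply: eq_big_nat => i /andP[i1 ir].
  have ei : ((1 + r - i.+1 + r) + i = 2 * r)%N by lia.
  have -> : mu ^+ (1 + r - i.+1 + r) = (mu ^+ i)^-1.
    rewrite -[mu ^+ (1 + r - i.+1 + r)](mulfK (expf_neq0 i mu0)) -exprD ei.
    by rewrite (prim_expr_order pmu) mul1r.
  apply: term_id => //.
rewrite E in full.
set D := \prod_(1 <= k < r) _ in full *; set A := \prod_(1 <= k < r) _ in full *.
have : 2 * (D * A) ^+ 2 = 2 * r%:R.
  by rewrite -(natrM _ 2 r) -full; ring.
have n2 : (2 : algC) != 0 by rewrite pnatr_eq0.
by move/(mulfI n2).
Qed.

Lemma odd_half n : odd n -> (n.-1./2 = n./2)%N /\ (n = n./2 * 2 + 1)%N.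
Proof.
move=> on; have e := odd_double_half n; rewrite on -muln2 in e.
set k := n./2 in e *.
have -> : n.-1 = (k * 2)%N by lia.
by rewrite -divn2 mulnK //; split=> //; lia.
Qed.

Section Euler.
Variable p : nat.
Hypothesis pr : prime p.
Hypothesis po : odd p.
Local Notation F := ('F_p).

Lemma dvdzF (n : int) : (p%:Z %| n)%Z = (n%:~R == 0 :> F).
Proof. exact: dvdz_pcharf (pchar_Fp pr) n. Qed.

Lemma fermatF (x : F) : x != 0 -> x ^+ p.-1 = 1.
Proof.
move=> x0; apply: (mulIf x0); rewrite mul1r -exprSr prednK ?prime_gt0 //.
by have := expf_card x; rewrite card_Fp.
Qed.

Lemma primF : exists g : F, p.-1.-primitive_root g.
Proof.
have p1 : (0 < p.-1)%N by have := prime_gt1 pr; lia.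
have H : has p.-1.-primitive_root [seq x <- enum F | x != 0].
  apply: has_prim_root => //.
 apply/allP => x; rewrite mem_filter => /andP[x0 _].
  by rewrite unity_rootE fermatF.
- by rewrite filter_uniq // enum_uniq.
- rewrite (_ : [seq x <- enum F | x != 0] = enum (predC1 (0 : F))); last first.
    by rewrite enumT; apply: eq_filter.
  by rewrite -cardE cardC1 card_Fp.
by case/hasP: H => g _ pg; exists g.
Qed.

Lemma half_pred : (p.-1./2 = p./2)%N /\ (p./2 * 2 = p.-1)%N /\ (0 < p./2)%N.
Proof.
have e := odd_double_half p; rewrite po -muln2 in e.
have p2 := prime_gt1 pr.
have p3 : p != 2%N by apply/eqP => e2; move: po; rewrite e2.
set k := p./2 in e *.
have -> : p.-1 = (k * 2)%N by lia.
by rewrite -divn2 mulnK //; split=> //; split=> //; lia.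
Qed.

Lemma euler (a : int) : ~~ (p%:Z %| a)%Z -> (p%:Z %| a ^+ (p.-1)./2 - legendre a p)%Z.
Proof.
move=> na; case: half_pred => [-> [h2 h0]]; set h := p./2 in h2 h0 *.
rewrite dvdzF rmorphB rmorphXn /= subr_eq0.
set al := (a%:~R : F).
have a0 : al != 0 by rewrite /al -dvdzF.
rewrite /legendre (negbTE na).
case: existsP => [[x hx]|nx].
  move: hx; rewrite dvdzF rmorphB rmorphXn /= subr_eq0 -/al => /eqP hx.
  have x0 : (x%:Z)%:~R != 0 :> F by apply: contraNneq a0 => e; rewrite -hx e expr0n.
  by rewrite -hx -exprM mulnC h2 fermatF // rmorph1.
have : (al ^+ h) ^+ 2 = 1 by rewrite -exprM h2 fermatF.
move/eqP; rewrite sqrf_eq1 => /orP[/eqP b1|/eqP ->]; last by rewrite rmorphN1.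
exfalso; apply: nx.
case: primF => g pg.
case: (prim_rootP pg (fermatF a0)) => [[k _] /= ek].
have : (p.-1 %| k * h)%N by rewrite (prim_order_dvd pg) exprM -ek b1.
rewrite -h2 mulnC dvdn_pmul2r // => /dvdnP[m em].
set y := g ^+ m.
have yp : (val y < p)%N by rewrite -[X in (_ < X)%N](Fp_cast pr) ltn_ord.
exists (Ordinal yp); rewrite dvdzF rmorphB rmorphXn /= subr_eq0 -/al.
rewrite ek em mulnC exprM -/y.
have -> : ((Ordinal yp : nat)%:Z)%:~R = y :> F by rewrite -pmulrn /= natr_Zp.
by rewrite exprAC.
Qed.



Lemma legendre_pm (a : int) : ~~ (p%:Z %| a)%Z -> legendre a p = 1 \/ legendre a p = -1.
Proof. by move=> na; rewrite /legendre (negbTE na); case: ifP; [left|right]. Qed.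

Lemma euler_s (a : int) s : ~~ (p%:Z %| a)%Z ->
  (p%:Z %| a ^+ ((p ^ s).-1./2) - (legendre a p) ^+ s)%Z.
Proof.
move=> na; have E1 := euler na.
move: E1; rewrite !dvdzF !rmorphB !rmorphXn /= !subr_eq0 => /eqP E1.
set L := legendre a p in E1 *.
have L2 : L ^+ 2 = 1 by rewrite /L; case: (legendre_pm na) => ->.
elim: s => [|s IH]; first by rewrite expn0 /= !expr0.
have oP : odd (p ^ s) by rewrite oddX po orbT.
have oP1 : odd (p ^ s.+1) by rewrite oddX po orbT.
case: (odd_half oP) => [e1 e2]; case: (odd_half oP1) => [e3 e4]; case: (odd_half po) => [e5 e6].
have eh : ((p ^ s.+1).-1./2 = p * (p ^ s).-1./2 + p.-1./2)%N.
  rewrite e1 e3 e5; rewrite expnS in e4 *.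
  set u := (p ^ s)./2 in e2 *; set w := (p * p ^ s)./2 in e4 *; set k := p./2 in e6 *.
  clearbody u w k; move: e2 e4; move: (p ^ s)%N => P e2 e4; nia.
move/eqP: IH => IH.
rewrite eh exprD mulnC exprM IH E1.
have L2F : (L%:~R : F) ^+ 2 = 1 by rewrite -rmorphXn /= L2 rmorph1.
have Xp : forall x : F, x ^+ 2 = 1 -> x ^+ p = x.
  move=> x hx; rewrite (_ : x ^+ p = x ^+ (p./2 * 2 + 1)); last by rewrite -e6.
  by rewrite exprD expr1 mulnC exprM hx expr1n mul1r.
rewrite Xp; first by rewrite exprSr.
by rewrite exprAC L2F expr1n.
Qed.
End Euler.

Section Main.
Variables (p s r : nat) (plus : bool).
Hypotheses (pr : prime p) (po : odd p) (s1 : (1 <= s)%N) (r3 : (3 <= r)%N).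
Hypothesis hdiv : (r %| (if plus then (p ^ s + 1)./2 else (p ^ s - 1)./2))%N.

Local Notation R := (in_Rr r).
Local Notation cg := (congr_Rr r p).
Local Notation tr := ((2 * r)%:R : algC).
Local Notation N := (p ^ s)%N.

Let r0 : (0 < r)%N. Proof. by lia. Qed.

Lemma t2 : ((tt r)./2 * 2 = tt r)%N.
Proof. by rewrite /tt; case: odd; rewrite -divn2 divnK // dvdn_mulr. Qed.

Lemma pxi : (tt r).-primitive_root (xi r).
Proof.
have t0 : (0 < (tt r)./2)%N.
  by rewrite /tt; case: odd; rewrite -divn2 ?divn_gt0 //; lia.
by have := root_neg1_prim t0; rewrite t2.
Qed.

Lemma Rroot z m : (m %| tt r)%N -> z ^+ m = 1 -> R z.
Proof.
move=> /dvdnP[k ek] hz; have zt : z ^+ tt r = 1 by rewrite ek mulnC exprM hz expr1n.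
case: (prim_rootP pxi zt) => i ->; apply: Rr_exp; exact: Rr_xi.
Qed.

Lemma Rroot_inv z m : (m %| tt r)%N -> z ^+ m = 1 -> R z^-1.
Proof. by move=> d hz; apply: (Rroot d); rewrite exprVn hz invr1. Qed.

Lemma d2r : (2 * r %| tt r)%N.
Proof. by rewrite /tt; case: odd; apply: dvdn_mul. Qed.
Lemma d4 : (4 %| tt r)%N.
Proof. by rewrite /tt; case: odd; apply: dvdn_mulr. Qed.
Lemma d4r : (2 * (2 * r) %| tt r)%N.
Proof. by rewrite /tt; case: odd; rewrite mulnA; apply: dvdn_mul. Qed.
Lemma d8 : (8 %| tt r)%N.
Proof.
rewrite /tt; case: ifP => [_|ho]; first exact: dvdn_mulr.
have : (2 %| r)%N by rewrite dvdn2 ho.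
by move=> h2; apply: (dvdn_mul (dvdnn 4) h2).
Qed.

Lemma lam_r : lambda r ^+ (2 * r) = 1.
Proof. by rewrite mulnC exprM /lambda rootCK // sqrrN expr1n. Qed.

Lemma Rlam : R (lambda r). Proof. exact: Rroot d2r lam_r. Qed.
Lemma Rlami : R (lambda r)^-1. Proof. exact: Rroot_inv d2r lam_r. Qed.
Lemma Ri : R 'i.
Proof. by apply: (Rroot d4); rewrite (exprM _ 2 2) sqrCi sqrrN expr1n. Qed.

Lemma Rsq : R (sqrtC tr).
Proof.
have n0 : (0 < 2 * (2 * r))%N by lia.
case: (C_prim_root_exists n0) => z pz.
have Rz : R z := Rroot d4r (prim_expr_order pz).
have Rzi : R z^-1 := Rroot_inv d4r (prim_expr_order pz).
set yr := (\prod_(1 <= k < r) (z ^+ r * (z^-1) ^+ k)) * \prod_(1 <= k < r) (1 - (z ^+ 2) ^+ k).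
have Ryr : R yr.
  apply: Rr_mul; apply: Rr_prod => i; first by apply: Rr_mul; apply: Rr_exp.
  by apply: Rr_sub; [apply: Rr1|do 2 apply: Rr_exp].
have yr2 : yr ^+ 2 = r%:R := sqrt_r r0 pz.
case: (C_prim_root_exists (isT : (0 < 8)%N)) => o po8.
have Ro : R o := Rroot d8 (prim_expr_order po8).
have Roi : R o^-1 := Rroot_inv d8 (prim_expr_order po8).
have o0 : o != 0.
  by apply/eqP => e; have := prim_expr_order po8; rewrite e expr0n /= => /eqP; rewrite eq_sym oner_eq0.
have o4 : o ^+ 4 = -1.
  have : (o ^+ 4) ^+ 2 = 1 by rewrite -exprM (prim_expr_order po8).
  move/eqP; rewrite sqrf_eq1 => /orP[/eqP e|/eqP //].
  by have := prim_order_dvd po8 4; rewrite e eqxx.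
have o2i : (o ^+ 2)^-1 = - o ^+ 2.
  apply: (mulfI (expf_neq0 2 o0)); rewrite mulfV ?expf_neq0 // mulrN -exprD o4 opprK //.
set q2 := o + o^-1.
have q22 : q2 ^+ 2 = 2.
  rewrite /q2 sqrrD mulfV // exprVn o2i; ring.
set Pv := q2 * yr.
have RPv : R Pv by apply: Rr_mul => //; apply: Rr_add.
have Pv2 : Pv ^+ 2 = tr by rewrite exprMn q22 yr2 natrM.
have : (sqrtC tr - Pv) * (sqrtC tr + Pv) = 0 by rewrite -subr_sqr sqrtCK Pv2 subrr.
move/eqP; rewrite mulf_eq0 => /orP[|]; first by rewrite subr_eq0 => /eqP ->.
by rewrite addr_eq0 => /eqP ->; apply: Rr_opp.
Qed.


Lemma sq0 : sqrtC tr != 0.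
Proof. by rewrite sqrtC_eq0 (tr_neq0 r0). Qed.

Lemma sqi : (sqrtC tr)^-1 = sqrtC tr * tr^-1.
Proof.
apply: (mulfI sq0); rewrite mulfV ?sq0 // mulrA -expr2 sqrtCK mulfV //.
exact: tr_neq0.
Qed.

Lemma Rsqi : R (sqrtC tr)^-1.
Proof. by rewrite sqi; apply: Rr_mul; [exact: Rsq|exact: Rr_inv_tr r0]. Qed.

Lemma Reta : R (eta r).
Proof.
rewrite /eta; apply: Rr_mul; last exact: Rsqi.
apply: Rr_mul; first by apply: Rr_opp; exact: Ri.
by apply: Rr_sub; [exact: Rlam|exact: Rlami].
Qed.

Lemma oN : odd N. Proof. by rewrite oddX po orbT. Qed.

Lemma negN (x : algC) : (- x) ^+ N = - x ^+ N.
Proof. by rewrite exprNn -signr_odd oN expr1 mulN1r. Qed.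

Lemma fr_add x y : R x -> R y -> cg ((x + y) ^+ N) (x ^+ N + y ^+ N).
Proof. move=> hx hy; have := frobN pr s hx hy; exact. Qed.

Lemma fr_sub x y : R x -> R y -> cg ((x - y) ^+ N) (x ^+ N - y ^+ N).
Proof. by move=> hx hy; rewrite -negN; apply: fr_add => //; apply: Rr_opp. Qed.

Definition sg : algC := if plus then -1 else 1.

Lemma halfN : (N = N./2 * 2 + 1)%N.
Proof. by case: (odd_half oN). Qed.

Lemma lamN : lambda r ^+ N = if plus then (lambda r)^-1 else lambda r.
Proof.
have l0 : lambda r != 0.
  apply/eqP => e; have := lam_r; rewrite e expr0n; have -> : (2 * r == 0)%N = false by lia.
  by move/eqP; rewrite eq_sym oner_eq0.
have k2 : forall k, ((k * 2)./2 = k)%N by move=> k; rewrite -divn2 mulnK.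
move: hdiv; case: plus => hd.
- have e : (N + 1 = (N./2).+1 * 2)%N by rewrite {1}halfN; lia.
  have : (2 * r %| N + 1)%N.
    by rewrite e [(2 * r)%N]mulnC dvdn_pmul2r // -(k2 (N./2).+1) -e.
  case/dvdnP => k ek.
  apply: (mulIf l0); rewrite mulVf // -exprSr -addn1 ek exprM.
  by rewrite exprAC lam_r expr1n.
- have e : (N - 1 = N./2 * 2)%N by rewrite {1}halfN; lia.
  have : (2 * r %| N - 1)%N.
    by rewrite e [(2 * r)%N]mulnC dvdn_pmul2r // -(k2 N./2) -e.
  case/dvdnP => k ek.
  rewrite halfN exprD expr1 -e ek exprM.
  by rewrite exprAC lam_r !expr1n mul1r.
Qed.

Lemma lam_sum : - lambda r ^+ N - ((lambda r)^-1) ^+ N = - lambda r - (lambda r)^-1.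
Proof. by rewrite exprVn lamN; case: plus; rewrite ?invrK; ring. Qed.

Lemma lam_diff : lambda r ^+ N - ((lambda r)^-1) ^+ N = sg * (lambda r - (lambda r)^-1).
Proof. by rewrite exprVn lamN /sg; case: plus; rewrite ?invrK; ring. Qed.

Lemma RD : R (- lambda r - (lambda r)^-1).
Proof. by apply: Rr_sub; [apply: Rr_opp; exact: Rlam|exact: Rlami]. Qed.

Lemma DN : cg ((- lambda r - (lambda r)^-1) ^+ N) (- lambda r - (lambda r)^-1).
Proof.
rewrite -{2}lam_sum -negN; apply: fr_sub; first by apply: Rr_opp; exact: Rlam.
exact: Rlami.
Qed.

Lemma Delta_all i : [/\ R (Delta r i), R (Delta r i.+1),
  cg (Delta r i ^+ N) (Delta r i) & cg (Delta r i.+1 ^+ N) (Delta r i.+1)].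
Proof.
elim: i => [|i [a b c d]].
  rewrite Delta0 Delta1; split; [exact: Rr1|exact: RD| |exact: DN].
  by rewrite expr1n; apply: cg_refl.
split=> //; rewrite Delta_rec.
  by apply: Rr_sub => //; apply: Rr_mul => //; exact: RD.
apply: cg_trans (fr_sub _ _) _; first by apply: Rr_mul => //; exact: RD.
  by [].
apply: cg_add; last exact: cg_opp.
rewrite exprMn; apply: cg_mul => //; [exact: DN|exact: Rr_exp|exact: RD].
Qed.


Local Notation h := (N./2).
Local Notation K := ((-1) ^+ h * (tr^-1) ^+ h).

Lemma RK : R K.
Proof. by apply: Rr_mul; apply: Rr_exp; [apply: Rr_opp; exact: Rr1|exact: Rr_inv_tr r0]. Qed.

Lemma Rsg : R sg.
Proof. by rewrite /sg; case: plus; [apply: Rr_opp|]; exact: Rr1. Qed.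

Lemma etaN : cg ((eta r) ^+ N) (sg * K * eta r).
Proof.
set l := lambda r; set e := (sqrtC tr)^-1.
have iN : ('i : algC) ^+ N = (-1) ^+ h * 'i by rewrite {1}halfN exprD expr1 exprM exprAC sqrCi.
have eN : e ^+ N = (tr^-1) ^+ h * e.
  by rewrite {1}halfN exprD expr1 exprM exprAC /e exprVn sqrtCK.
have -> : (eta r) ^+ N = ((- 'i) ^+ N * e ^+ N) * (l - l^-1) ^+ N.
  by rewrite /eta !exprMn; ring.
rewrite negN iN eN.
have Rm1 : R (-1) by apply: Rr_opp; exact: Rr1.
have RA : R (- ((-1) ^+ h * 'i) * ((tr^-1) ^+ h * e)).
  apply: Rr_mul; first by apply: Rr_opp; apply: Rr_mul; [exact: Rr_exp|exact: Ri].
  by apply: Rr_mul; [apply: Rr_exp; exact: Rr_inv_tr r0|exact: Rsqi].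
have Ru : R ((l - l^-1) ^+ N) by apply: Rr_exp; apply: Rr_sub; [exact: Rlam|exact: Rlami].
apply: (cg_trans (cg_mul (cg_refl r p _) (fr_sub Rlam Rlami) Ru RA)).
apply: cg_eq; rewrite -/l lam_diff /eta -/l -/e; ring.
Qed.

Local Notation L := (legendre (- (2 * r)%:Z) p).
Local Notation Ls := ((L ^+ s)%:~R : algC).

Lemma KLs : cg K Ls.
Proof.
have na : ~~ (p%:Z %| - (2 * r)%:Z)%Z.
  rewrite dvdzE abszN /=; apply/negP => pd.
  have h2 : (2 * r %| if plus then N + 1 else N - 1)%N.
    have k2 : forall k, ((k * 2)./2 = k)%N by move=> k; rewrite -divn2 mulnK.
    move: hdiv; case: plus => hd.
    - have e : (N + 1 = (N./2).+1 * 2)%N by rewrite {1}halfN; lia.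
      by rewrite e [(2 * r)%N]mulnC dvdn_pmul2r // -(k2 (N./2).+1) -e.
    - have e : (N - 1 = N./2 * 2)%N by rewrite {1}halfN; lia.
      by rewrite e [(2 * r)%N]mulnC dvdn_pmul2r // -(k2 N./2) -e.
  have pN : (p %| N)%N by apply: dvdn_exp; [exact: s1|exact: dvdnn].
  have pd2 := dvdn_trans pd h2.
  have p1 : (p %| 1)%N.
    move: pd2; case: plus.
    - by move=> H; rewrite -(dvdn_addr _ pN).
    - move=> H; have := dvdn_sub pN H.
      have e1 : forall M k, (M = k * 2 + 1)%N -> (M - (M - 1) = 1)%N by clear; move=> M k hM; lia.
      by rewrite (e1 _ _ halfN).
  by have := prime_gt1 pr; rewrite ltn_neqAle eq_sym -dvdn1 p1.
have H := euler_s pr po s na.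
have eh : ((p ^ s).-1./2 = h)%N by case: (odd_half oN).
rewrite eh in H.
have := cg_int r H.
have -> : ((- (2 * r)%:Z) ^+ h)%:~R = (- tr) ^+ h :> algC.
  by rewrite rmorphXn rmorphN /= -pmulrn.
move=> HM.
have L2 : Ls ^+ 2 = 1.
  by rewrite -rmorphXn /= exprAC; case: (legendre_pm na) => ->; rewrite ?sqrrN !expr1n rmorph1.
have MK : (- tr) ^+ h * K = 1.
  rewrite -!exprMn; have -> : - tr * (-1 * tr^-1) = 1.
    by rewrite mulN1r mulrNN mulfV ?(tr_neq0 r0).
  by rewrite expr1n.
apply: cg_sym; have := cg_mulr HM (Rr_mul RK (Rr_int r (L ^+ s))).
by rewrite mulrA MK mul1r mulrCA -expr2 L2 mulr1.
Qed.

Lemma main_i i : cg ((eta r * Delta r i) ^+ N)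
  ((- (if plus then 1 else -1) * L ^+ s)%:~R * eta r * Delta r i).
Proof.
case: (Delta_all i) => RDi _ DiN _.
rewrite exprMn.
apply: cg_trans.
  apply: (cg_mul etaN DiN); first exact: Rr_exp.
  by apply: Rr_mul; [apply: Rr_mul; [exact: Rsg|exact: RK]|exact: Reta].
have E : (- (if plus then 1 else -1) * L ^+ s)%:~R = sg * Ls :> algC.
  by rewrite /sg rmorphM /=; case: plus; rewrite /= ?rmorphN ?opprK ?rmorph1 //.
rewrite E.
have := cg_mulr KLs (Rr_mul (Rr_mul Rsg Reta) RDi).
set k := K; set l := Ls; set q := sg * eta r * Delta r i.
have -> : sg * k * eta r * Delta r i = k * q by rewrite /q; ring.
have -> : sg * l * eta r * Delta r i = l * q by rewrite /q; ring.
by [].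
Qed.

End Main.

Theorem proposition3 (p s r : nat) (plus : bool) :
  prime p -> odd p -> (1 <= s)%N -> (3 <= r)%N ->
  (r %| (if plus then (p ^ s + 1)./2 else (p ^ s - 1)./2))%N ->
  @congr_V r p (omega_tilde r p s)
    (eta_Delta_vec r
       ((- (if plus then 1 else -1) * (legendre (- (2 * r)%:Z) p) ^+ s)%:~R)).
Proof.
move=> pr po s1 r3 hdiv.
set c := (_ %:~R : algC).
have p0 : (p%:R : algC) != 0 by rewrite pnatr_eq0 -lt0n prime_gt0.
exists [ffun i => (omega_tilde r p s i - eta_Delta_vec r c i) / p%:R].
split.
- move=> i; rewrite ffunE.
  have [z [Rz e]] := main_i pr po s1 r3 hdiv i.
  rewrite /omega_tilde /eta_Delta_vec !ffunE /c e mulrC mulKf //.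
- by move=> i; rewrite !ffunE [p%:R * _]mulrC divfK.
Qed.
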